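(* For every integer $n \geq 1$, $D_n = n\, Der_{n-1}$.
   Context: A linear arrangement of $\{1,\ldots,n\}$ is a sequence $a_1\cdots a_n$ in which each of $1,\ldots,n$ appears exactly once. It contains the pattern $ij$ if $a_t=i$ and $a_{t+1}=j$ for some $t$; otherwise it avoids it. $D_n$ is the number of linear arrangements of $\{1,\ldots,n\}$ avoiding all of the patterns $12, 23, \ldots, (n-1)n, n1$. $Der_m$ is the number of permutations of $\{1,\ldots,m\}$ with no fixed point (so $Der_0 = 1$). *)

(* Defs.v *)
From mathcomp Require Import all_boot all_order all_fingroup.
Set Implicit Arguments. Unset Strict Implicit. Unset Printing Implicit Defensive.

(* Values 1..n are encoded as 0..n-1 (type 'I_n); positions 1..n likewise.
   A linear arrangement a_1...a_n is a permutation s : {perm 'I_n}, with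
   s t = a_{t+1} (position t, value s t). *)

Definition contains_pattern (n : nat) (s : {perm 'I_n}) (i j : 'I_n) : bool :=
  [exists t : 'I_n, exists u : 'I_n, (val u == (val t).+1) && (s t == i) && (s u == j)].

Definition avoids_cyclic (n : nat) (s : {perm 'I_n}) : bool :=
  [forall i : 'I_n, forall j : 'I_n,
     (val j == ((val i).+1 %% n)) ==> ~~ contains_pattern s i j].

Definition D (n : nat) : nat := #|[set s : {perm 'I_n} | avoids_cyclic s]|.

Definition Der (m : nat) : nat := #|[set s : {perm 'I_m} | [forall i, s i != i]]|.

(* Main.v *)
Require Import Defs.
From mathcomp Require Import all_boot all_order all_fingroup.
From mathcomp Require Import zify.
Set Implicit Arguments. Unset Strict Implicit. Unset Printing Implicit Defensive.

Definition g K (s : 'S_K) (x : nat) : nat :=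
  oapp (fun o : 'I_K => val (s o)) 0 (insub x).

Lemma gE K (s : 'S_K) (o : 'I_K) : g s o = s o.
Proof. by rewrite /g valK. Qed.

Lemma gE' K (s : 'S_K) x (h : x < K) : g s x = s (Ordinal h).
Proof. by rewrite -gE. Qed.

Lemma g_lt K (s : 'S_K) x : x < K -> g s x < K.
Proof. by move=> h; rewrite (gE' s h). Qed.

Lemma g_inj K (s : 'S_K) x y : x < K -> y < K -> g s x = g s y -> x = y.
Proof.
move=> hx hy; rewrite (gE' s hx) (gE' s hy) => /val_inj /perm_inj.
by case.
Qed.

Lemma g_lift_perm_o k (i j : 'I_k.+1) (s : 'S_k) (o : 'I_k.+1) :
  g (lift_perm i j s) o = if val o == i then val j else bump j (g s (unbump i o)).
Proof.
rewrite gE.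
case: (unliftP i o) => [w|] ->.
- rewrite (_ : (val (lift i w) == val i) = false); last by apply/negbTE; rewrite eq_sym; exact: (neq_lift i w).
  rewrite lift_perm_lift /=.
  by rewrite bumpK gE.
- by rewrite eqxx lift_perm_id.
Qed.

Lemma g_lift_perm k (i j : 'I_k.+1) (s : 'S_k) x : x < k.+1 ->
  g (lift_perm i j s) x = if x == i then val j else bump j (g s (unbump i x)).
Proof. by move=> hx; have := g_lift_perm_o i j s (Ordinal hx). Qed.

Definition restr_fun k (t : 'S_k.+1) (i : 'I_k.+1) (w : 'I_k) : 'I_k :=
  odflt w (unlift (t i) (t (lift i w))).

Lemma restr_funE k (t : 'S_k.+1) i w : lift (t i) (restr_fun t i w) = t (lift i w).
Proof.
rewrite /restr_fun; have /unlift_some[j -> ->] : t i != t (lift i w).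
  by rewrite (inj_eq perm_inj) neq_lift.
by [].
Qed.

Lemma restr_inj k (t : 'S_k.+1) i : injective (restr_fun t i).
Proof.
by move=> a b /(congr1 (lift (t i))); rewrite !restr_funE => /perm_inj /lift_inj.
Qed.

Definition restr k (t : 'S_k.+1) i : 'S_k := perm (@restr_inj k t i).

Lemma restrE k (t : 'S_k.+1) i w : lift (t i) (restr t i w) = t (lift i w).
Proof. by rewrite /restr permE restr_funE. Qed.

Lemma lift_perm_restr k (t : 'S_k.+1) i : lift_perm i (t i) (restr t i) = t.
Proof.
apply/permP => x; case: (unliftP i x) => [w|] ->.
  by rewrite lift_perm_lift restrE.
by rewrite lift_perm_id.
Qed.

Lemma lift_perm_inj k (i j : 'I_k.+1) : injective (@lift_perm k i j).
Proof.
move=> a b e; apply/permP => w.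
have := congr1 (fun s : 'S_k.+1 => s (lift i w)) e.
by rewrite /= !lift_perm_lift => /lift_inj.
Qed.

Definition NS K (s : 'S_K) (P : pred nat) : bool :=
  [forall t : 'I_K, ((t.+1 < K) && P t) ==> (g s t.+1 != (g s t).+1)].

Lemma NSP K (s : 'S_K) (P : pred nat) :
  reflect (forall t, t.+1 < K -> P t -> g s t.+1 != (g s t).+1) (NS s P).
Proof.
apply: (iffP forallP) => [h t ht hP | h t].
  have ht' : t < K by lia.
  by have := h (Ordinal ht'); rewrite /= ht hP.
by apply/implyP => /andP[a b]; apply: h.
Qed.

Lemma card_pairs (T1 T2 : finType) (P : T1 -> T2 -> bool) :
  #|[set x : T1 * T2 | P x.1 x.2]| = \sum_(a : T1) #|[set b | P a b]|.
Proof.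
rewrite -sum1dep_card -(pair_big_dep xpredT P (fun _ _ => 1)) /=.
by apply: eq_bigr => a _; rewrite sum1dep_card.
Qed.

Lemma card_pairs' (T1 T2 : finType) (P : T1 -> T2 -> bool) :
  #|[set x : T1 * T2 | P x.1 x.2]| = \sum_(b : T2) #|[set a | P a b]|.
Proof.
rewrite -sum1dep_card -(pair_big_dep xpredT P (fun _ _ => 1)) /=.
rewrite (exchange_big_dep xpredT) //=.
by apply: eq_bigr => a _; rewrite sum1dep_card.
Qed.

Section DerRec.
Variable k : nat.
Local Notation N := (@ord_max k.+1).

Definition Phi (x : 'I_k.+1 * 'S_k.+1) : 'S_k.+2 :=
  (tperm (lift N x.1) N * lift_perm N N x.2)%g.

Lemma Phi_inj : injective Phi.
Proof.
move=> [a1 a2] [b1 b2]; rewrite /Phi /= => e.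
have e1 : a1 = b1.
  have := congr1 (fun s : 'S_k.+2 => s (lift N a1)) e.
  rewrite /= !permM tpermL lift_perm_id -{1}(lift_perm_id N N b2).
  move=> /perm_inj /esym.
  case: (eqVneq (lift N a1) (lift N b1)) => [/lift_inj //|ne].
  rewrite tpermD; first by move=> ee; move: (neq_lift N a1); rewrite ee eqxx.
    by rewrite eq_sym.
  exact: neq_lift.
subst b1; move: e => /mulgI /lift_perm_inj -> //.
Qed.

Definition DomD := [set x : 'I_k.+1 * 'S_k.+1 | [forall w, (w != x.1) ==> (x.2 w != w)]].

Lemma Phi_lift x w : w != x.1 -> Phi x (lift N w) = lift N (x.2 w).
Proof.
move=> hw; rewrite /Phi permM tpermD ?lift_perm_lift //.
  by rewrite (inj_eq lift_inj) eq_sym.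
exact: neq_lift.
Qed.

Lemma Phi_der x : (Phi x \in [set s : 'S_k.+2 | [forall i, s i != i]]) = (x \in DomD).
Proof.
rewrite !inE; apply/forallP/forallP => h.
- move=> w; apply/implyP => hw; have := h (lift N w).
  by rewrite Phi_lift // (inj_eq lift_inj).
- move=> y; case: (unliftP N y) => [w|] ->.
  + case: (eqVneq w x.1) => [->|hw].
      by rewrite /Phi permM tpermL lift_perm_id neq_lift.
    by rewrite Phi_lift // (inj_eq lift_inj); have := h w; rewrite hw.
  + by rewrite /Phi permM tpermR lift_perm_lift eq_sym neq_lift.
Qed.

Lemma Phi_surj (s : 'S_k.+2) : [forall i, s i != i] -> exists x, s = Phi x.
Proof.
move=> /forallP h.
have hk : N != (s^-1)%g N.
  apply/eqP => e; have := h N; by rewrite [X in s X != _]e permKV eqxx.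
have [q eq _] := unlift_some hk.
pose r := (tperm (lift N q) N * s)%g.
have rN : r N = N by rewrite /r permM tpermR -eq permKV.
exists (q, restr r N); rewrite /Phi /=.
have := lift_perm_restr r N; rewrite rN => ->.
by rewrite /r mulgA tperm2 mul1g.
Qed.

Lemma der_img : [set s : 'S_k.+2 | [forall i, s i != i]] = Phi @: DomD.
Proof.
apply/setP => s; apply/idP/imsetP.
- move=> hs; have := hs; rewrite inE => /Phi_surj [x ex].
  by exists x => //; rewrite -Phi_der -ex.
- by move=> [x hx ->]; rewrite Phi_der.
Qed.

Definition Xi (y : 'I_k.+1 * 'S_k) : 'I_k.+1 * 'S_k.+1 := (y.1, lift_perm y.1 y.1 y.2).

Lemma Xi_inj : injective Xi.
Proof.
move=> [a1 a2] [b1 b2] [e1]; subst b1 => /lift_perm_inj -> //.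
Qed.

Lemma DerS : Der k.+2 = k.+1 * (Der k.+1 + Der k).
Proof.
rewrite /Der der_img card_imset; last exact: Phi_inj.
rewrite -(cardsID [set x : 'I_k.+1 * 'S_k.+1 | x.2 x.1 == x.1]).
have -> : DomD :\: [set x : 'I_k.+1 * 'S_k.+1 | x.2 x.1 == x.1] =
          setX [set: 'I_k.+1] [set s : 'S_k.+1 | [forall i, s i != i]].
  apply/setP => [[q p]]; rewrite !inE /=; apply/idP/idP.
  - move=> /andP[nq /forallP h]; apply/forallP => w.
    case: (eqVneq w q) => [->//|hw]; by have := h w; rewrite hw.
  - move=> /forallP h; rewrite h /=; apply/forallP => w; by rewrite h implybT.
have -> : DomD :&: [set x : 'I_k.+1 * 'S_k.+1 | x.2 x.1 == x.1] =
          Xi @: setX [set: 'I_k.+1] [set s : 'S_k | [forall i, s i != i]].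
  apply/setP => [[q p]]; rewrite !inE /=; apply/idP/imsetP.
  - move=> /andP[/forallP h pq].
    exists (q, restr p q).
      rewrite !inE /=; apply/forallP => w.
      have := h (lift q w); rewrite eq_sym neq_lift /= -restrE.
      by rewrite (eqP pq) (inj_eq lift_inj).
    rewrite /Xi /=; have := lift_perm_restr p q; rewrite (eqP pq) => e.
    by rewrite e.
  - move=> [[q' p'] hp [-> ->]] /=; rewrite lift_perm_id eqxx andbT.
    move: hp; rewrite !inE /= => /forallP h.
    apply/forallP => w; apply/implyP => hw.
    case: (unliftP q' w) hw => [v|] ->; last by rewrite eqxx.
    by rewrite lift_perm_lift (inj_eq lift_inj) h.
rewrite card_imset; last exact: Xi_inj.
rewrite !cardsX cardsT card_ord; lia.
Qed.

End DerRec.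

Lemma unbumpE h y : unbump h y = if h < y then y.-1 else y.
Proof. by rewrite /unbump; case: ltnP => _ /=; rewrite ?subn1 ?subn0. Qed.

Lemma bumpE h y : bump h y = if h <= y then y.+1 else y.
Proof. by rewrite /bump; case: leqP => _ /=; rewrite ?add1n ?add0n. Qed.

Definition nosucc K (s : 'S_K) := NS s (fun _ => true).
Definition arr k := [set s : 'S_k.+1 | (g s 0 == 0) && nosucc s].
Definition A k := #|arr k|.

Section ARec.
Variable k : nat.

Definition Psi (x : 'I_k.+2 * 'S_k.+2) : 'S_k.+3 :=
  lift_perm (lift ord0 x.1) ord_max x.2.

Lemma gPsi (x : 'I_k.+2 * 'S_k.+2) y : y < k.+3 ->
  g (Psi x) y = if y == x.1.+1 then k.+2 else g x.2 (unbump x.1.+1 y).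
Proof.
move=> hy; rewrite /Psi g_lift_perm //= /bump /=.
case: eqP => // hne.
have : g x.2 (unbump x.1.+1 y) < k.+2.
  have := ltn_ord x.1 => hq; apply: g_lt; rewrite unbumpE; case: ifP => hh; lia.
move=> hl; rewrite add1n (_ : (k.+1 < _) = false) //; lia.
Qed.

Lemma gPsi_lo (x : 'I_k.+2 * 'S_k.+2) y : y <= x.1 -> g (Psi x) y = g x.2 y.
Proof.
move=> hy; have := ltn_ord x.1 => hq.
rewrite gPsi; last lia.
rewrite (_ : (y == x.1.+1) = false); last lia.
rewrite unbumpE (_ : (x.1.+1 < y) = false) //; lia.
Qed.

Lemma gPsi_mid (x : 'I_k.+2 * 'S_k.+2) : g (Psi x) x.1.+1 = k.+2.
Proof. have := ltn_ord x.1 => hq; rewrite gPsi ?eqxx //; lia. Qed.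

Lemma gPsi_hi (x : 'I_k.+2 * 'S_k.+2) y : x.1.+1 < y -> y < k.+3 -> g (Psi x) y = g x.2 y.-1.
Proof.
move=> h1 h2; rewrite gPsi //.
rewrite (_ : (y == x.1.+1) = false); last lia.
by rewrite unbumpE h1.
Qed.

Definition DomA := [set x : 'I_k.+2 * 'S_k.+2 |
  [&& g x.2 0 == 0, g x.2 x.1 != k.+1 & NS x.2 (fun t => t != x.1)]].

Lemma Psi_arr x : (Psi x \in arr k.+2) = (x \in DomA).
Proof.
have hq := ltn_ord x.1.
rewrite !inE gPsi_lo //; congr (_ && _).
apply/NSP/andP => [h|[hN /NSP h] t ht _].
- split.
    have := h x.1 ltac:(lia) isT; rewrite gPsi_mid gPsi_lo //.
    by apply: contra => /eqP ->.
  apply/NSP => t ht hne.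
  case: (ltnP t x.1) => htq.
    by have := h t ltac:(lia) isT; rewrite !gPsi_lo //; lia.
  have htq' : x.1 < t by lia.
  by have := h t.+1 ltac:(lia) isT; rewrite !gPsi_hi //; lia.
- case: (ltngtP t x.1) => htq.
  + rewrite !gPsi_lo; [|lia|lia]; apply: h; lia.
  + case: (eqVneq t x.1.+1) => htq2.
      subst t; rewrite gPsi_mid.
      have := g_lt (Psi x) ht; lia.
    rewrite (gPsi_hi (y := t)); [|lia|lia].
    rewrite (gPsi_hi (y := t.+1)); [|lia|lia].
    have -> : t = t.-1.+1 by lia.
    rewrite -pred_Sn; apply: h; lia.
  + subst t; rewrite gPsi_mid gPsi_lo //.
    apply/eqP => e; move/eqP: hN; lia.
Qed.

Lemma Psi_inj : injective Psi.
Proof.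
move=> [a1 a2] [b1 b2]; rewrite /Psi /= => e.
have e1 : a1 = b1.
  have := congr1 (fun s : 'S_k.+3 => s (lift ord0 a1)) e.
  rewrite /= lift_perm_id -{1}(lift_perm_id (lift ord0 b1) ord_max b2).
  by move=> /perm_inj /lift_inj.
subst b1; move: e => /lift_perm_inj -> //.
Qed.

Lemma Psi_surj (s : 'S_k.+3) : g s 0 == 0 -> exists x, s = Psi x.
Proof.
move=> h0.
have hk : ord0 != (s^-1)%g ord_max.
  apply/eqP => e; move: h0; rewrite (gE' s (ltn0Sn _)).
  have -> : Ordinal (ltn0Sn k.+2) = ord0 by apply: val_inj.
  by rewrite e permKV.
have [q eq _] := unlift_some hk.
exists (q, restr s (lift ord0 q)); rewrite /Psi /=.
have := lift_perm_restr s (lift ord0 q).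
by rewrite -eq permKV => ->.
Qed.

Lemma arr_img : arr k.+2 = Psi @: DomA.
Proof.
apply/setP => s; apply/idP/imsetP.
- move=> hs; have := hs; rewrite inE => /andP[/Psi_surj [x ex] _].
  by exists x => //; rewrite -Psi_arr -ex.
- by move=> [x hx ->]; rewrite Psi_arr.
Qed.

Definition BA := [set x : 'I_k.+2 * 'S_k.+2 |
  (x.1.+1 < k.+2) && (g x.2 x.1.+1 == (g x.2 x.1).+1)].

Lemma DomA_diff : DomA :\: BA = [set x : 'I_k.+2 * 'S_k.+2 | (x.2 \in arr k.+1) && (g x.2 x.1 != k.+1)].
Proof.
apply/setP => [[q s]]; rewrite !inE /=; apply/idP/idP.
- move=> /andP[nB /and3P[h0 hN /NSP h]]; rewrite h0 hN /= andbT.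
  apply/NSP => t ht _; case: (eqVneq t q) => [e|ne]; last exact: h.
  subst t; move: nB; rewrite ht /=; by [].
- move=> /andP[/andP[h0 /NSP h] hN]; rewrite h0 hN /=.
  apply/andP; split.
    by apply/negP => /andP[a b]; have := h q a isT; rewrite b.
  by apply/NSP => t ht _; apply: h.
Qed.

Lemma card_DomA_diff : #|DomA :\: BA| = k.+1 * A k.+1.
Proof.
rewrite DomA_diff (card_pairs' (fun (a : 'I_k.+2) (b : 'S_k.+2) => (b \in arr k.+1) && (g b a != k.+1))) /A.
rewrite (eq_bigr (fun b => if b \in arr k.+1 then k.+1 else 0)); last first.
  move=> b _; case: ifP => hb.
  2:{ by apply/eqP; rewrite cards_eq0; apply/eqP/setP => a; rewrite !inE. }
  rewrite (_ : [set a : 'I_k.+2 | _] = [set~ (b^-1)%g ord_max]); first by rewrite cardsC1 card_ord.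
    apply/setP => a; rewrite !inE gE.
    apply/idP/idP; apply: contra.
      by move=> /eqP ->; rewrite permKV.
    by move=> /eqP e; apply/eqP; rewrite -(permK b a); congr (_ _); apply: val_inj; rewrite /= e.
by rewrite -big_mkcond sum_nat_const mulnC.
Qed.

Lemma bump_succ h a : a.+1 != h -> bump h a.+1 = (bump h a).+1.
Proof. move=> ne; rewrite !bumpE; case: (leqP h a) => h1; case: (leqP h a.+1) => h2 //; lia. Qed.

Definition Theta (y : 'I_k.+1 * 'S_k.+1) : 'I_k.+2 * 'S_k.+2 :=
  (widen_ord (leqnSn _) y.1, lift_perm (lift ord0 y.1) (lift ord0 (y.2 y.1)) y.2).

Lemma gT (y : 'I_k.+1 * 'S_k.+1) z : z < k.+2 ->
  g (Theta y).2 z = if z == y.1.+1 then (g y.2 y.1).+1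
                    else bump (g y.2 y.1).+1 (g y.2 (unbump y.1.+1 z)).
Proof. by move=> hz; rewrite /Theta /= g_lift_perm //= /bump /= !add1n gE. Qed.

Lemma gT_lo (y : 'I_k.+1 * 'S_k.+1) z : z <= y.1 ->
  g (Theta y).2 z = bump (g y.2 y.1).+1 (g y.2 z).
Proof.
move=> hz; have := ltn_ord y.1 => hq; rewrite gT; last lia.
rewrite (_ : (z == y.1.+1) = false); last lia.
rewrite unbumpE (_ : (y.1.+1 < z) = false) //; lia.
Qed.

Lemma gT_mid (y : 'I_k.+1 * 'S_k.+1) : g (Theta y).2 y.1.+1 = (g y.2 y.1).+1.
Proof. have := ltn_ord y.1 => hq; rewrite gT ?eqxx //; lia. Qed.

Lemma gT_hi (y : 'I_k.+1 * 'S_k.+1) z : y.1.+1 < z -> z < k.+2 ->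
  g (Theta y).2 z = bump (g y.2 y.1).+1 (g y.2 z.-1).
Proof.
move=> h1 h2; rewrite gT //.
rewrite (_ : (z == y.1.+1) = false); last lia.
by rewrite unbumpE h1.
Qed.

Lemma NS_Theta (y : 'I_k.+1 * 'S_k.+1) :
  NS (Theta y).2 (fun t => t != y.1) = nosucc y.2.
Proof.
have hq := ltn_ord y.1.
have hv : g y.2 y.1 < k.+1 by apply: g_lt.
have neq t : t < k.+1 -> t != y.1 -> (g y.2 t).+1 != (g y.2 y.1).+1.
  move=> ht tq; apply: contra tq => /eqP [] /(g_inj ht hq) ->; by [].
apply/NSP/NSP => h t ht htn.
- case: (ltngtP t y.1) => htq.
  + have := h t ltac:(lia) ltac:(lia); rewrite !gT_lo; [|lia|lia].
    rewrite -bump_succ; last by apply: neq; lia.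
    by rewrite (inj_eq (can_inj (bumpK _))).
  + have := h t.+1 ltac:(lia) ltac:(lia).
    rewrite (gT_hi (z := t.+2)); [|lia|lia].
    rewrite (gT_hi (z := t.+1)); [|lia|lia].
    rewrite /= -bump_succ; last by apply: neq; lia.
    by rewrite (inj_eq (can_inj (bumpK _))).
  + subst t; have := h y.1.+1 ltac:(lia) ltac:(lia).
    rewrite (gT_hi (z := y.1.+2)); [|lia|lia].
    rewrite gT_mid /= bumpE; case: leqP => hh; lia.
- case: (ltngtP t y.1) => htq.
  + rewrite !gT_lo; [|lia|lia].
    rewrite -bump_succ; last by apply: neq; lia.
    rewrite (inj_eq (can_inj (bumpK _))); apply: h; lia.
  + case: (eqVneq t y.1.+1) => htq2.
      subst t; rewrite gT_mid (gT_hi (z := y.1.+2)); [|lia|lia].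
      have := h y.1 ltac:(lia) isT; rewrite /= bumpE; case: leqP => hh; lia.
    rewrite (gT_hi (z := t.+1)); [|lia|lia].
    rewrite (gT_hi (z := t)); [|lia|lia].
    have -> : t = t.-1.+1 by lia.
    rewrite -pred_Sn -bump_succ; last by apply: neq; lia.
    rewrite (inj_eq (can_inj (bumpK _))); apply: h; lia.
  + by move: htn; rewrite htq eqxx.
Qed.

Lemma Theta_in (y : 'I_k.+1 * 'S_k.+1) : (Theta y \in DomA :&: BA) = (y.2 \in arr k).
Proof.
have hq := ltn_ord y.1.
have hv : g y.2 y.1 < k.+1 by apply: g_lt.
rewrite !inE NS_Theta /=.
rewrite gT_mid (gT_lo (z := 0)) // (gT_lo (z := y.1)) //.
have -> : bump (g y.2 y.1).+1 (g y.2 y.1) = g y.2 y.1 by rewrite bumpE ltnn.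
rewrite eqxx ltnS hq andbT /= (_ : (g y.2 y.1 != k.+1) = true); last lia.
rewrite andbT bumpE; case: leqP => hh /=; first by [].
by rewrite (_ : g y.2 0 == 0 = false) //; apply/negbTE; rewrite -lt0n; apply: leq_ltn_trans hh.
Qed.

Lemma Theta_inj : injective Theta.
Proof.
move=> [a1 a2] [b1 b2]; rewrite /Theta /= => [[e1 e]].
have e1' : a1 = b1 by apply: val_inj.
subst b1.
have ej : lift ord0 (a2 a1) = lift ord0 (b2 a1).
  have := congr1 (fun s : 'S_k.+2 => s (lift ord0 a1)) e.
  by rewrite /= !lift_perm_id.
move: e; rewrite ej => /lift_perm_inj -> //.
Qed.

Lemma Theta_surj x : x \in DomA :&: BA -> exists y, x = Theta y.
Proof.
case: x => [q' s]; rewrite !inE /= => /andP[_ /andP[hq hs]].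
have hq' : q' < k.+1 by [].
pose q : 'I_k.+1 := Ordinal hq'.
pose p : 'I_k.+2 := lift ord0 q.
have hsp : s p = lift ord0 (restr s p q).
  apply: val_inj => /=.
  have e1 : val (s p) = (g s q').+1.
    by rewrite -(eqP hs) (_ : q'.+1 = val p) // gE.
  have e2 : bump (s p) (restr s p q) = g s q'.
    have := congr1 val (restrE s p q).
    rewrite /= => ->; rewrite (_ : q' = lift p q) ?gE //.
    by apply: val_inj; rewrite /= /bump /=; lia.
  move: e2; rewrite /bump /= e1; case: leqP => hh /=; lia.
exists (q, restr s p); rewrite /Theta /=; congr pair.
  by apply: val_inj.
have := lift_perm_restr s p; rewrite hsp => ->; by [].
Qed.

Lemma DomA_cap : DomA :&: BA = Theta @: setX [set: 'I_k.+1] (arr k).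
Proof.
apply/setP => x; apply/idP/imsetP.
- move=> hx; have [[y1 y2] ey] := Theta_surj hx.
  exists (y1, y2) => //; rewrite in_setX in_setT /=.
  by rewrite -(Theta_in (y1, y2)) -ey.
- move=> [[y1 y2] hy ->]; rewrite Theta_in; by move: hy; rewrite in_setX => /andP[_ ->].
Qed.

End ARec.

Lemma AS k : A k.+2 = k.+1 * (A k.+1 + A k).
Proof.
rewrite {1}/A arr_img card_imset; last exact: Psi_inj.
rewrite -(cardsID (BA k)) card_DomA_diff DomA_cap card_imset; last exact: Theta_inj.
rewrite cardsX cardsT card_ord /A; lia.
Qed.

Lemma A0 : A 0 = 1.
Proof.
rewrite /A (_ : arr 0 = setT) ?cardsT ?card_Sn //.
apply/setP => s; rewrite !inE.
have := g_lt s (ltn0Sn 0); rewrite ltnS leqn0 => -> /=.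
by apply/NSP => t ht; lia.
Qed.

Lemma A1 : A 1 = 0.
Proof.
apply/eqP; rewrite cards_eq0; apply/eqP/setP => s; rewrite !inE.
apply/negP => /andP[/eqP h0 /NSP h].
have := h 0 isT isT; rewrite h0.
have := g_lt s (isT : 1 < 2); have : g s 1 != g s 0.
  by apply/eqP => /(g_inj (isT : 1 < 2) (isT : 0 < 2)).
rewrite h0; lia.
Qed.

Lemma Der0 : Der 0 = 1.
Proof.
rewrite /Der (_ : [set s : 'S_0 | _] = setT) ?cardsT ?card_Sn //.
by apply/setP => s; rewrite !inE; apply/forallP => -[].
Qed.

Lemma Der1 : Der 1 = 0.
Proof.
apply/eqP; rewrite cards_eq0; apply/eqP/setP => s; rewrite !inE.
apply/negP => /forallP /(_ ord0); rewrite (_ : s ord0 = ord0) ?eqxx //.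
by apply: val_inj; case: (s ord0) => -[].
Qed.

Lemma A_Der k : A k = Der k.
Proof.
suff : A k = Der k /\ A k.+1 = Der k.+1 by case.
elim: k => [|k [IH1 IH2]]; first by rewrite A0 A1 Der0 Der1.
by split => //; rewrite AS DerS IH1 IH2.
Qed.

Section Rot.
Variable k : nat.
Local Notation K := k.+1.

Definition cyc (s : 'S_K) :=
  [forall t : 'I_K, (t.+1 < K) ==> (g s t.+1 != (g s t).+1 %% K)].

Lemma avoidsE (s : 'S_K) : avoids_cyclic s = cyc s.
Proof.
apply/forallP/forallP => h.
- move=> t; apply/implyP => ht; apply/negP => /eqP e.
  have hp : contains_pattern s (s t) (s (Ordinal ht)).
    by apply/existsP; exists t; apply/existsP; exists (Ordinal ht); rewrite !eqxx.
  have := h (s t) => /forallP /(_ (s (Ordinal ht))); rewrite hp implybF => /negP; apply.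
  apply/eqP; move: e; rewrite gE (gE' s ht); exact.
- move=> i; apply/forallP => j; apply/implyP => hij; apply/negP.
  move=> /existsP[t /existsP[u /andP[/andP[hu /eqP hi] /eqP hj]]].
  have ht : t.+1 < K by rewrite -(eqP hu) ltn_ord.
  have := h t; rewrite ht /= => /eqP; apply.
  have -> : t.+1 = val u by rewrite (eqP hu).
  by rewrite !gE hi hj (eqP hij).
Qed.

Definition rotf (c v : 'I_K) : 'I_K := Ordinal (ltn_pmod (v + c) (ltn0Sn k)).

Lemma rotf_inj c : injective (rotf c).
Proof.
move=> v w /(congr1 val) /= /eqP; rewrite eqn_modDr !modn_small // => /eqP.
exact: val_inj.
Qed.

Definition rot c : 'S_K := perm (@rotf_inj c).

Lemma g_rot (s : 'S_K) c t : t < K -> g (s * rot c)%g t = (g s t + c) %% K.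
Proof. by move=> ht; rewrite !(gE' _ ht) permM permE. Qed.

Lemma modS_mod x : (x %% K).+1 %% K = x.+1 %% K.
Proof. by rewrite -addn1 modnDml addn1. Qed.

Lemma rot_step (s : 'S_K) c (t : nat) : t.+1 < K ->
  (g (s * rot c)%g t.+1 == (g (s * rot c)%g t).+1 %% K) = (g s t.+1 == (g s t).+1 %% K).
Proof.
move=> ht; rewrite !g_rot; [|lia|lia].
rewrite modS_mod -addSn eqn_modDr.
by rewrite (modn_small (g_lt s ht)).
Qed.

Lemma cyc_rot (s : 'S_K) c : cyc (s * rot c)%g = cyc s.
Proof.
apply: eq_forallb => t; case: (ltnP t.+1 K) => ht //=.
by rewrite rot_step.
Qed.
Lemma rot0 c : rot c ord0 = c.
Proof. by apply: val_inj; rewrite permE /= add0n modn_small. Qed.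

Lemma arr_cyc : arr k = [set s : 'S_K | cyc s && (s ord0 == ord0)].
Proof.
apply/setP => s; rewrite !inE.
have -> : (s ord0 == ord0) = (g s 0 == 0) by rewrite (gE' s (ltn0Sn k)).
case: (eqVneq (g s 0) 0) => h0 /=; last by rewrite andbF.
rewrite andbT; apply: eq_forallb => t; case: (ltnP t.+1 K) => ht //=.
case: (ltnP (g s t).+1 K) => hg; first by rewrite modn_small.
have e : (g s t).+1 = K by have := g_lt s (ltnW ht); lia.
rewrite e modnn.
have -> : (g s t.+1 != K) = true by have := g_lt s ht; lia.
apply/esym/eqP => e2; rewrite -h0 in e2.
by have := g_inj ht (ltn0Sn k) e2.
Qed.

Lemma D_A : D K = K * A k.
Proof.
rewrite /D (_ : [set s | avoids_cyclic s] = [set s | cyc s]); last first.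
  by apply/setP => s; rewrite !inE avoidsE.
rewrite -sum1dep_card (partition_big (fun s : 'S_K => s ord0) xpredT) //=.
rewrite (eq_bigr (fun _ => A k)).
  by rewrite big_const_ord iter_addn_0 mulnC.
move=> c _; rewrite sum1dep_card /A arr_cyc.
rewrite (_ : [set s | cyc s && (s ord0 == c)] =
   (fun s => s * rot c)%g @: [set s | cyc s && (s ord0 == ord0)]).
  by rewrite card_imset //; exact: mulIg.
apply/setP => s; apply/idP/imsetP.
- rewrite inE => /andP[hc hs0]; exists (s * (rot c)^-1)%g; last by rewrite -mulgA mulVg mulg1.
  rewrite inE; have := cyc_rot (s * (rot c)^-1)%g c; rewrite -mulgA mulVg mulg1 => <-.
  rewrite hc permM (eqP hs0) /=; apply/eqP; apply: (@perm_inj _ (rot c)); by rewrite permKV rot0.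
- move=> [t ht ->]; move: ht; rewrite !inE => /andP[ht ht0].
  by rewrite cyc_rot ht permM (eqP ht0) rot0 eqxx.
Qed.
End Rot.

Theorem lemma3p1 (n : nat) (hn : 1 <= n) : D n = n * Der n.-1.
Proof. by case: n hn => [//|k] _; rewrite D_A A_Der. Qed.
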